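(* Let RV (Range Voting) be the voting rule that, on any profile, elects an alternative maximizing the social welfare of the voters of that profile. In any district-based election with $m$ alternatives, $n$ voters and $k$ districts using RV in every district, for any election winner $a$, $$\frac{\max_{j}\mathrm{SW}(j\mid\mathbf v)}{\mathrm{SW}(a\mid\mathbf v)}\le \begin{cases} 1+\dfrac{mk}{2} & \text{(symmetric)},\\[2mm] 1+\dfrac{m}{2}\left(\dfrac{n+\max_{d}n_d}{\min_{d}n_d}-1\right) & \text{(unweighted)},\\[2mm] 1+m\left(\dfrac{n}{\min_{d}n_d}-1\right) & \text{(unrestricted)}. \end{cases}$$
   Context: A district-based election consists of a set $\mathcal M$ of $m\ge 2$ alternatives, a set $\mathcal N$ of $n$ voters, a partition $\mathcal D$ of $\mathcal N$ into $k$ nonempty districts (district $d$ has $n_d$ voters), positive weights $w_d>0$, and a valuation profile $\mathbf v$ with $v_{ij}\ge0$ and $\sum_j v_{ij}=1$ for every voter $i$. In each district $d$ the local winner $j_d$ is the output of the voting rule on the subprofile of voters in $d$ (local ties broken arbitrarily); the election winner is any alternative in $\arg\max_j\sum_d w_d\mathbf 1[j=j_d]$. $\mathrm{SW}(j\mid\mathbf v)=\sum_i v_{ij}$. Symmetric: $n_d=n/k$, $w_d=1$; unweighted: $w_d=1$; unrestricted: arbitrary sizes and positive weights. *)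

(* Defs.v *)
From HB Require Import structures.
From mathcomp Require Import all_boot all_order all_algebra.
Set Implicit Arguments. Unset Strict Implicit. Unset Printing Implicit Defensive.
Import Order.TTheory GRing.Theory Num.Theory.
Local Open Scope ring_scope.

Section Election.
Variables (R : realFieldType) (A V D : finType).
(* A : alternatives, V : voters, D : districts,
   dist : V -> D assigns each voter to its district (the partition),
   v i j : valuation of voter i for alternative j. *)

Definition SW (v : V -> A -> R) (j : A) : R := \sum_(i : V) v i j.

Definition district_SW (v : V -> A -> R) (dist : V -> D) (d : D) (j : A) : R :=
  \sum_(i : V | dist i == d) v i j.

Definition RV_local_winners (v : V -> A -> R) (dist : V -> D) (jd : D -> A) : Prop :=
  forall (d : D) (j : A), district_SW v dist d j <= district_SW v dist d (jd d).

Definition score (w : D -> R) (jd : D -> A) (j : A) : R :=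
  \sum_(d : D | jd d == j) w d.

Definition election_winner (w : D -> R) (jd : D -> A) (a : A) : Prop :=
  forall j : A, score w jd j <= score w jd a.

Definition dsize (dist : V -> D) (d : D) : nat := #|[set i : V | dist i == d]|.

(* min_d n_d and max_d n_d (min taken with initial value n >= every n_d) *)
Definition min_dsize (dist : V -> D) : nat := \big[minn/#|V|]_(d : D) dsize dist d.
Definition max_dsize (dist : V -> D) : nat := \max_(d : D) dsize dist d.

Definition valid_profile (v : V -> A -> R) : Prop :=
  (forall i j, 0 <= v i j) /\ (forall i, \sum_(j : A) v i j = 1).

End Election.

(* Main.v *)
Require Import Defs.
From HB Require Import structures.
From mathcomp Require Import all_boot all_order all_algebra.
From mathcomp Require Import ring lra.
Import Order.TTheory GRing.Theory Num.Theory.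
Local Open Scope ring_scope.

Section Aux.
Variables (R : realFieldType) (A V D : finType) (v : V -> A -> R) (dist : V -> D).

Lemma SW_split j : SW v j = \sum_d district_SW v dist d j.
Proof.
rewrite /SW /district_SW (partition_big dist predT) //.
Qed.

Lemma dsizeE d : ((dsize dist d)%:R : R) = \sum_(i | dist i == d) 1.
Proof.
rewrite /dsize sumr_const; congr (_ *+ _).
by apply: eq_card => i; rewrite inE.
Qed.

Lemma dSW_total d : valid_profile v ->
  \sum_j district_SW v dist d j = (dsize dist d)%:R.
Proof.
move=> [_ H1]; rewrite dsizeE /district_SW exchange_big /=.
by apply: eq_bigr => i _; rewrite H1.
Qed.

Lemma nsum : ((#|V|)%:R : R) = \sum_d ((dsize dist d)%:R : R).
Proof.
rewrite -sum1_card natr_sum (partition_big dist predT) //=.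
apply: eq_bigr => d _; rewrite dsizeE; exact: eq_bigr.
Qed.


Lemma dSW_ge0 d j : valid_profile v -> 0 <= district_SW v dist d j.
Proof. by move=> [H0 _]; apply: sumr_ge0 => i _; apply: H0. Qed.

Lemma dSW_le d j : valid_profile v -> district_SW v dist d j <= (dsize dist d)%:R.
Proof.
move=> Hv; rewrite -(dSW_total d Hv) (bigD1 j) //= lerDl.
by apply: sumr_ge0 => k _; apply: dSW_ge0.
Qed.

Lemma dSW_two d j k : valid_profile v -> j != k ->
  district_SW v dist d j + district_SW v dist d k <= (dsize dist d)%:R.
Proof.
move=> Hv njk; rewrite -(dSW_total d Hv) (bigD1 j) //= (bigD1 k) 1?eq_sym //= addrA lerDl.
by apply: sumr_ge0 => l _; apply: dSW_ge0.
Qed.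

End Aux.
Arguments SW_split {R A V D} v dist j.
Arguments nsum {R V D} dist.
Arguments dSW_total {R A V D} v dist d _.
Arguments dSW_ge0 {R A V D} v dist d j _.
Arguments dSW_le {R A V D} v dist d j _.
Arguments dSW_two {R A V D} v dist d j k _ _.

Lemma bigmin_le_nat (D : finType) (F : D -> nat) d x : (\big[minn/x]_(e : D) F e <= F d)%N.
Proof.
have : d \in index_enum D by rewrite mem_index_enum.
elim: (index_enum D) => // e s IH; rewrite inE big_cons => /orP [/eqP <-|/IH h].
  exact: geq_minl.
exact: leq_trans (geq_minr _ _) h.
Qed.

Theorem corollary1 (R : realFieldType) (A V D : finType)
    (v : V -> A -> R) (dist : V -> D) (w : D -> R) (jd : D -> A) (a : A) :
    (2 <= #|A|)%N ->
    valid_profile v ->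
    (forall d : D, exists i : V, dist i = d) ->
    (forall d : D, 0 < w d) ->
    RV_local_winners v dist jd ->
    election_winner w jd a ->
    let m : R := #|A|%:R in
    let n : R := #|V|%:R in
    let k : R := #|D|%:R in
    let nmin : R := (min_dsize dist)%:R in
    let nmax : R := (max_dsize dist)%:R in
    (* unrestricted *)
    (forall j : A, SW v j <= (1 + m * (n / nmin - 1)) * SW v a) /\
    (* unweighted *)
    ((forall d : D, w d = 1) ->
      forall j : A, SW v j <= (1 + m / 2 * ((n + nmax) / nmin - 1)) * SW v a) /\
    (* symmetric *)
    ((forall d : D, w d = 1) -> (forall d : D, (dsize dist d * #|D|)%N = #|V|) ->
      forall j : A, SW v j <= (1 + m * k / 2) * SW v a).
Proof.
move=> hA Hv Hex Hw Hrv Hwin m n k nmin nmax.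
have [HV0|HVpos] := posnP #|V|.
  have Z : forall j, SW v j = 0.
    move=> j; rewrite /SW big1 // => i _.
    by have := card0_eq HV0 i; rewrite !inE.
  by split; [|split] => *; rewrite !Z mulr0.
case/card_gt0P: HVpos => i0 _.
set d0 := dist i0.
set nd := fun d => ((dsize dist d)%:R : R).
have Hds : forall d, (0 < dsize dist d)%N.
  move=> d; case: (Hex d) => i Hi; apply/card_gt0P; exists i; by rewrite inE Hi.
have Hmin_pos : (0 < min_dsize dist)%N.
  rewrite /min_dsize; apply: (big_ind (fun x => (0 < x)%N)) => //; first by apply/card_gt0P; exists i0.
    by move=> x y hx hy; rewrite leq_min hx hy.
have Hmin_le : forall d, (min_dsize dist <= dsize dist d)%N.
  by move=> d; apply: bigmin_le_nat.
have Hmax_ge : forall d, (dsize dist d <= max_dsize dist)%N.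
  by move=> d; rewrite /max_dsize; apply: leq_bigmax.
have Hsc0 : w d0 <= score w jd a.
  apply: le_trans (Hwin (jd d0)).
  rewrite /score (bigD1 d0) //= lerDl; apply: sumr_ge0 => d _; exact: ltW.
have [da /eqP Hda | Hnone] := pickP (fun d => jd d == a); last first.
  exfalso; move: Hsc0; rewrite /score big_pred0 // => H.
  by have := lt_le_trans (Hw d0) H; rewrite ltxx.
set s := \sum_(d | jd d == a) nd d.
set r := \sum_(d | jd d != a) nd d.
have Hsr : s + r = n by rewrite /n (nsum dist) (bigID (fun d => jd d == a)).
have Hr0 : 0 <= r by apply: sumr_ge0.
have Hs_min : nmin <= s.
  rewrite /s (bigD1 da) ?Hda //= -[nmin]addr0 lerD //.
    by rewrite ler_nat Hmin_le.
  by apply: sumr_ge0.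
have Hnmin0 : 0 < nmin by rewrite ltr0n.
have HSWa : s <= m * SW v a.
  rewrite (SW_split v dist) (bigID (fun d => jd d == a)) /= mulrDr.
  rewrite -[s]addr0 lerD //; last first.
    by apply: mulr_ge0 => //; apply: sumr_ge0 => d _; apply: dSW_ge0.
  rewrite mulr_sumr; apply: ler_sum => d /eqP Hd.
  rewrite /nd -(dSW_total v dist d Hv) /m mulr_natl -sumr_const.
  by apply: ler_sum => j _; rewrite -Hd; apply: Hrv.
have HSWa0 : 0 <= SW v a by apply: sumr_ge0 => i _; case: Hv => H0 _; apply: H0.
have Hunr : forall j, SW v j <= SW v a + r.
  have Er : r = \sum_d (if jd d != a then nd d else 0) by rewrite /r big_mkcond.
  move=> j; rewrite (SW_split v dist j) (SW_split v dist a) Er -big_split /=.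
  apply: ler_sum => d _.
  case: ifP => [Hd | /negbFE /eqP Hd].
    apply: le_trans (dSW_le v dist d j Hv) _.
    by rewrite ?lerDl ?lerDr dSW_ge0.
  by rewrite addr0 -Hd; apply: Hrv.
split.
  move=> j; have H := Hunr j.
  set x := n / nmin.
  have Hx : x * nmin = n by rewrite /x divfK // gt_eqF.
  have Hx1 : 1 <= x by nra.
  have P1 : 0 <= (m * SW v a - s) * (x - 1) by apply: mulr_ge0; lra.
  have P2 : 0 <= (s - nmin) * x by apply: mulr_ge0; lra.
  nra.
have Hnd0 : forall d, 0 <= nd d by move=> d; rewrite /nd ler0n.
have Hunw : (forall d, w d = 1) ->
    forall j, SW v j <= (1 + m / 2 * ((n + nmax) / nmin - 1)) * SW v a.
  move=> H1 j.
  set sj := \sum_(d | jd d == j) nd d.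
  set t := score w jd a.
  have Ht1 : 1 <= t by rewrite /t -(H1 d0).
  have Hsj : sj <= nmax * t.
    apply: (@le_trans _ _ (nmax * score w jd j)).
      rewrite /score mulr_sumr; apply: ler_sum => d _.
      by rewrite H1 mulr1 ler_nat Hmax_ge.
    by apply: ler_wpM2l; [rewrite ler0n | apply: Hwin].
  have Hst : nmin * t <= s.
    rewrite /t /score mulr_sumr; apply: ler_sum => d _.
    by rewrite H1 mulr1 ler_nat Hmin_le.
  have Hmain : 2 * SW v j <= 2 * SW v a + r + sj.
    have Er : r = \sum_d (if jd d != a then nd d else 0) by rewrite /r big_mkcond.
    have Esj : sj = \sum_d (if jd d == j then nd d else 0) by rewrite /sj big_mkcond.
    rewrite (SW_split v dist j) (SW_split v dist a) !mulr_sumr Er Esj -!big_split /=.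
    apply: ler_sum => d _.
    have HA := dSW_ge0 v dist d a Hv.
    have Hle := dSW_le v dist d j Hv.
    have Hrvj := Hrv d j.
    have Hn0 := Hnd0 d.
    case: ifP => [Hna | /negbFE /eqP Hda'].
      case: ifP => [/eqP Hdj | /negbT Hnj]; first lra.
      have := dSW_two v dist d j (jd d) Hv ltac:(by rewrite eq_sym Hnj); lra.
    rewrite Hda' in Hrvj.
    case: ifP => _; lra.
  set y := (n + nmax) / nmin.
  have Hy : y * nmin = n + nmax by rewrite /y divfK // gt_eqF.
  have Hmm : nmin <= nmax by rewrite ler_nat (leq_trans (Hmin_le d0) (Hmax_ge d0)).
  have Hn0 : 0 <= n by rewrite /n ler0n.
  have Hy1 : 1 <= y by nra.
  have P1 : 0 <= (m * SW v a - s) * (y - 1) by apply: mulr_ge0; lra.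
  have P2 : 0 <= (s - nmin * t) * y by apply: mulr_ge0; lra.
  have P3 : 0 <= (t - 1) * n by apply: mulr_ge0; lra.
  nra.
split; first exact: Hunw.
move=> H1 Hsym j; apply: le_trans (Hunw H1 j) _.
have Hk : (0 < #|D|)%N by apply/card_gt0P; exists d0.
set c := dsize dist d0.
have Hc : forall d, dsize dist d = c.
  by move=> d; apply/eqP; rewrite -(eqn_pmul2r Hk) !Hsym.
have Emin : min_dsize dist = c.
  apply/eqP; rewrite eqn_leq Hmin_le /=.
  rewrite /min_dsize; apply: (big_ind (fun x => (c <= x)%N)).
  - by rewrite -(Hsym d0) leq_pmulr.
  - by move=> x y hx hy; rewrite leq_min hx hy.
  - by move=> d _; rewrite Hc.
have Emax : max_dsize dist = c.
  apply/eqP; rewrite eqn_leq Hmax_ge andbT; by apply/bigmax_leqP => d _; rewrite Hc.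
have En : n = c%:R * k by rewrite /n /k -natrM Hsym.
have Hc0 : (c%:R : R) != 0 by rewrite pnatr_eq0 -lt0n Hds.
apply: ler_wpM2r => //; rewrite le_eqVlt; apply/orP; left; apply/eqP.
rewrite /nmin /nmax Emin Emax En; field; exact: Hc0.
Qed.
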